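(* Let $k\ge 3$ and let $c$ be a proper coloring of $\mathcal H_k$. Then for any $i_1,i_2\in[k]$ with $i_1\equiv i_2\pmod 2$, we have $c(v_{i_1,j})=c(v_{i_2,j})$ for all $j\in[3]$.
   Context: A bi-hypergraph $\mathcal H=(V,E)$ consists of a finite vertex set $V$ and a set $E$ of subsets of $V$, called edges, with no edge contained in another. A mapping $f:V\to\mathbb N$ is a proper coloring of $\mathcal H$ if $1<|f(e)|<|e|$ for every $e\in E$, where $f(e)=\{f(v):v\in e\}$. For $k\ge 2$, $\mathcal H_k$ is the $3$-uniform bi-hypergraph with vertex set $\{v_{i,j}: i\in[k], j\in[3]\}$ (all distinct), where we use the convention $v_{i,4}=v_{i,1}$, $v_{i,5}=v_{i,2}$, and whose edges are: the sets $V_i=\{v_{i,1},v_{i,2},v_{i,3}\}$ for all $i\in[k]$, and the sets $\{v_{q+1,j},v_{q,j},v_{q,j+t}\}$ for all $q\in[k-1]$, $j\in[3]$, $t\in\{1,2\}$. *)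

(* Defs.v *)
From mathcomp Require Import all_boot.
Set Implicit Arguments. Unset Strict Implicit. Unset Printing Implicit Defensive.

(* |f(e)| is the number of distinct colours on e. *)
Definition proper_coloring (V : finType) (E : pred {set V}) (f : V -> nat) :=
  forall e : {set V}, E e -> 1 < size (undup [seq f x | x in e]) < #|e|.

(* H_k: vertex v_{i,j} (i in [k], j in [3]) is encoded as (i-1, j-1) : 'I_k * 'I_3.
   Indices in the third coordinate are taken mod 3 (v_{i,4} = v_{i,1}, ...). *)
Definition Hvert (k : nat) := ('I_k * 'I_3)%type.

Definition Hedge (k : nat) : pred {set Hvert k} :=
  fun e =>
    [exists i : 'I_k, e == [set x : Hvert k | x.1 == i]]
    || [exists q : 'I_k, exists j : 'I_3, exists t : 'I_3,
          [&& q.+1 < k, (0 < t)%N &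
              e == [set x : Hvert k | (nat_of_ord x.1 == q.+1) && (x.2 == j)
                      || (x.1 == q) && ((nat_of_ord x.2 == j)
                                       || (nat_of_ord x.2 == (j + t) %% 3))]]].

(* Main.v *)
Require Import Defs.
From mathcomp Require Import all_boot zify.
Set Implicit Arguments. Unset Strict Implicit.
Definition ok3 (x y z : nat) := 1 < size (undup [:: x; y; z]) < 3.
Lemma ok3P x y z : ok3 x y z -> ((x = y /\ z <> x) \/ (x <> y /\ (z = x \/ z = y))).
Proof.
rewrite /ok3 /= !inE.
case: (x =P y) => ?; case: (x =P z) => ?; case: (y =P z) => ?; rewrite /= ?inE; lia.
Qed.
Lemma L1 b a : ok3 b a a -> b <> a.
Proof. by case/ok3P=> [[e n]|[n _]] // _; apply: n; rewrite e. Qed.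
Lemma L2 b a a' : a <> a' -> ok3 b a a' -> b = a \/ b = a'.
Proof. by move=> n /ok3P [[e _]|[nb [h|h]]]; [left|right|case: n]. Qed.
Lemma L3 x z : ok3 x x z -> z <> x.
Proof. by case/ok3P=> [[_ n]|[n _]]. Qed.
Lemma L4 x y : ok3 x y x -> y <> x.
Proof. by case/ok3P=> [[e n]|[n _]] // ?; subst. Qed.
Lemma neqC (x y : nat) : x <> y -> y <> x. Proof. by move=> h ?; subst. Qed.

Lemma stepA a0 a2 b0 b1 b2 : a2 <> a0 -> ok3 b0 b1 b2 ->
 ok3 b0 a0 a0 -> ok3 b0 a0 a2 -> ok3 b1 a0 a2 -> ok3 b1 a0 a0 -> ok3 b2 a2 a0 ->
 [/\ b0 = a2, b1 = a2 & b2 = a0].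
Proof.
move=> n hb c1 c2 c3 c4 c5.
have e0 : b0 = a2 by case: (L2 (neqC n) c2) => // e; case: (L1 c1).
have e1 : b1 = a2 by case: (L2 (neqC n) c3) => // e; case: (L1 c4).
split=> //; case: (L2 n c5) => // e; subst.
by case: (L3 hb).
Qed.
Lemma stepB a0 a1 b0 b1 b2 : a1 <> a0 -> ok3 b0 b1 b2 ->
 ok3 b0 a0 a1 -> ok3 b0 a0 a0 -> ok3 b1 a1 a0 -> ok3 b2 a0 a0 -> ok3 b2 a0 a1 ->
 [/\ b0 = a1, b2 = a1 & b1 = a0].
Proof.
move=> n hb c1 c2 c4 c5 c6.
have e0 : b0 = a1 by case: (L2 (neqC n) c1) => // e; case: (L1 c2).
have e2 : b2 = a1 by case: (L2 (neqC n) c6) => // e; case: (L1 c5).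
split=> //; case: (L2 n c4) => // e; subst.
by case: (L4 hb).
Qed.
Lemma stepC a0 a1 b0 b1 b2 : a0 <> a1 -> ok3 b0 b1 b2 ->
 ok3 b0 a0 a1 -> ok3 b1 a1 a1 -> ok3 b1 a1 a0 -> ok3 b2 a1 a0 -> ok3 b2 a1 a1 ->
 [/\ b1 = a0, b2 = a0 & b0 = a1].
Proof.
move=> n hb c1 c3 c4 c5 c6.
have e1 : b1 = a0 by case: (L2 (neqC n) c4) => // e; case: (L1 c3).
have e2 : b2 = a0 by case: (L2 (neqC n) c5) => // e; case: (L1 c6).
split=> //; case: (L2 n c1) => // e; subst.
by case: (L1 hb).
Qed.

Lemma two_step a0 a1 a2 b0 b1 b2 d0 d1 d2 :
 ok3 a0 a1 a2 -> ok3 b0 b1 b2 -> ok3 d0 d1 d2 ->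
 ok3 b0 a0 a1 -> ok3 b0 a0 a2 -> ok3 b1 a1 a2 -> ok3 b1 a1 a0 -> ok3 b2 a2 a0 -> ok3 b2 a2 a1 ->
 ok3 d0 b0 b1 -> ok3 d0 b0 b2 -> ok3 d1 b1 b2 -> ok3 d1 b1 b0 -> ok3 d2 b2 b0 -> ok3 d2 b2 b1 ->
 [/\ d0 = a0, d1 = a1 & d2 = a2].
Proof.
move=> ha hb hd c1 c2 c3 c4 c5 c6 e1 e2 e3 e4 e5 e6.
case/ok3P: ha => [[h1 h2]|[h1 [h2|h2]]]; subst.
- have [? ? ?] := stepA h2 hb c1 c2 c3 c4 c5; subst.
  have [? ? ?] := stepA (neqC h2) hd e1 e2 e3 e4 e5; subst. by [].
- have [? ? ?] := stepB (neqC h1) hb c1 c2 c4 c5 c6; subst.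
  have [? ? ?] := stepB h1 hd e1 e2 e4 e5 e6; subst. by [].
- have [? ? ?] := stepC h1 hb c1 c3 c4 c5 c6; subst.
  have [? ? ?] := stepC (neqC h1) hd e1 e3 e4 e5 e6; subst. by [].
Qed.

Lemma edge3 (V : finType) (c : V -> nat) (e : {set V}) a b d :
  uniq [:: a; b; d] -> (forall v, (v \in e) = (v \in [:: a; b; d])) ->
  1 < size (undup [seq c v | v in e]) < #|e| -> ok3 (c a) (c b) (c d).
Proof.
move=> u he.
have -> : #|e| = 3.
  rewrite cardE; apply: (@perm_size _ _ [:: a; b; d]).
  by apply: uniq_perm => //; [exact: enum_uniq | move=> v; rewrite mem_enum he].
suff -> : size (undup [seq c v | v in e]) = size (undup [:: c a; c b; c d]) by [].
apply: perm_size; apply: uniq_perm; rewrite ?undup_uniq // => x.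
rewrite !mem_undup; apply/mapP/idP.
  by case=> v; rewrite mem_enum he !inE => /or3P [] /eqP -> ->; rewrite eqxx ?orbT.
rewrite !inE => /or3P [] /eqP ->; [exists a|exists b|exists d] => //; rewrite mem_enum he !inE eqxx ?orbT //.
Qed.

Section G.
Variables (k : nat) (c : Hvert k -> nat) (H : proper_coloring (@Hedge k) c).

Lemma row_ok (i : 'I_k) : ok3 (c (i, Ordinal (isT : 0 < 3))) (c (i, Ordinal (isT : 1 < 3))) (c (i, Ordinal (isT : 2 < 3))).
Proof.
apply: (edge3 (e := [set x : Hvert k | x.1 == i])); first by rewrite /= !inE !xpair_eqE eqxx.
  case=> v1 [[|[|[|//]]] hv]; rewrite !inE !xpair_eqE /= -?val_eqE /= ?andbT ?andbF ?orbF //.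
apply: H; apply/orP; left; apply/existsP; exists i; by [].
Qed.

Lemma cross_ok (q q1 : 'I_k) (j j' t : 'I_3) : val q1 = q.+1 -> (0 < t) ->
  val j' = (j + t) %% 3 -> j' != j -> ok3 (c (q1, j)) (c (q, j)) (c (q, j')).
Proof.
move=> hq1 ht hj nj.
have nq : q1 != q by rewrite -val_eqE hq1 /=; lia.
pose e := [set x : Hvert k | (nat_of_ord x.1 == q.+1) && (x.2 == j)
                      || (x.1 == q) && ((nat_of_ord x.2 == j)
                                       || (nat_of_ord x.2 == (j + t) %% 3))].
apply: (edge3 (e := e)).
- by rewrite /= !inE !xpair_eqE (negPf nq) eq_sym (negPf nj) /= andbF.
- case=> v1 v2; rewrite !inE !xpair_eqE /= -hq1 -hj !val_eqE.
  by case: (v1 == q1); case: (v1 == q); case: (v2 == j); case: (v2 == j').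
apply: H; apply/orP; right; apply/existsP; exists q; apply/existsP; exists j;
  apply/existsP; exists t.
have hk1 : q.+1 < k by rewrite -hq1 ltn_ord.
by rewrite hk1 ht /=.
Qed.
End G.

Theorem mainTheorem14 (k : nat) (hk : 3 <= k) (c : Hvert k -> nat) :
  proper_coloring (@Hedge k) c ->
  forall (i1 i2 : 'I_k), odd i1 = odd i2 ->
  forall j : 'I_3, c (i1, j) = c (i2, j).
Proof.
case: k hk c => [|k] // hk c H.
pose C n j := c (inord n, j).
have key : forall n, n.+2 < k.+1 -> forall j, C n.+2 j = C n j.
  move=> n hn.
  pose q : 'I_k.+1 := inord n; pose q1 : 'I_k.+1 := inord n.+1; pose q2 : 'I_k.+1 := inord n.+2.
  have hq1 : val q1 = (val q).+1 by rewrite /q /q1 /= !inordK //; lia.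
  have hq2 : val q2 = (val q1).+1 by rewrite /q2 /q1 /= !inordK //; lia.
  pose o0 : 'I_3 := Ordinal (isT : 0 < 3).
  pose o1 : 'I_3 := Ordinal (isT : 1 < 3).
  pose o2 : 'I_3 := Ordinal (isT : 2 < 3).
  have [d0 d1 d2] := two_step (row_ok H q) (row_ok H q1) (row_ok H q2)
    (cross_ok H (j:=o0) (j':=o1) (t:=o1) hq1 isT erefl isT)
    (cross_ok H (j:=o0) (j':=o2) (t:=o2) hq1 isT erefl isT)
    (cross_ok H (j:=o1) (j':=o2) (t:=o1) hq1 isT erefl isT)
    (cross_ok H (j:=o1) (j':=o0) (t:=o2) hq1 isT erefl isT)
    (cross_ok H (j:=o2) (j':=o0) (t:=o1) hq1 isT erefl isT)
    (cross_ok H (j:=o2) (j':=o1) (t:=o2) hq1 isT erefl isT)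
    (cross_ok H (j:=o0) (j':=o1) (t:=o1) hq2 isT erefl isT)
    (cross_ok H (j:=o0) (j':=o2) (t:=o2) hq2 isT erefl isT)
    (cross_ok H (j:=o1) (j':=o2) (t:=o1) hq2 isT erefl isT)
    (cross_ok H (j:=o1) (j':=o0) (t:=o2) hq2 isT erefl isT)
    (cross_ok H (j:=o2) (j':=o0) (t:=o1) hq2 isT erefl isT)
    (cross_ok H (j:=o2) (j':=o1) (t:=o2) hq2 isT erefl isT).
  case=> [[|[|[|//]]] hj].
  - by rewrite /C (_ : Ordinal hj = o0) //; apply: val_inj.
  - by rewrite /C (_ : Ordinal hj = o1) //; apply: val_inj.
  - by rewrite /C (_ : Ordinal hj = o2) //; apply: val_inj.
have ind : forall m n j, n + m.*2 < k.+1 -> C (n + m.*2) j = C n j.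
  elim=> [|m IH] n j hn; first by rewrite addn0.
  have -> : n + m.+1.*2 = (n + m.*2).+2 by rewrite doubleS !addnS.
  rewrite key; last by rewrite doubleS !addnS in hn.
  by apply: IH; rewrite doubleS !addnS in hn; lia.
have conv : forall i : 'I_k.+1, forall j, c (i, j) = C i j by move=> i j; rewrite /C inord_val.
suff W : forall i1 i2 : 'I_k.+1, odd i1 = odd i2 -> i1 <= i2 -> forall j, c (i1, j) = c (i2, j).
  move=> i1 i2 hp j; case: (leqP i1 i2) => hle; first exact: W.
  by symmetry; apply: W => //; apply: ltnW.
move=> i1 i2 hp hle j.
have hm : i2 = i1 + ((i2 - i1)./2).*2 :> nat.
  rewrite halfK oddB // hp addbb subn0; lia.
by rewrite !conv hm ind // -hm.
Qed.
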